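(* Suppose $L$ is a linear order with a first element such that $L/\!\sim_\omega\;\cong 1$ and $\operatorname{cf}(L)=\omega_1$, and suppose $L$ has a strictly increasing cofinal sequence $\langle x_\alpha:\alpha<\omega_1\rangle$ with $L=\bigcup_{\alpha<\omega_1}[x_\alpha,x_{\alpha+1})$. Then $L$ is isomorphic to a suborder of $U$.
   Context: The countable condensation $\sim_\omega$ on a linear order $L$: $x\sim_\omega y$ iff the closed interval between $x$ and $y$ is countable; $L/\!\sim_\omega\;\cong 1$ means all elements of $L$ are mutually $\sim_\omega$-equivalent. $\operatorname{cf}(L)$ is the least length of a strictly increasing cofinal sequence in $L$. $U$ is the linear order $R^*+\mathbb{Q}+R$, where $R$ is obtained from $\omega_1$ by replacing each $\alpha<\omega_1$ with a point $u_\alpha$ followed by a copy $\mathbb{Q}(\alpha)$ of the rationals (so $u_\alpha<\mathbb{Q}(\alpha)<u_{\alpha+1}$), $R^*$ is the reverse of $R$, and the middle summand is a copy of the rationals. *)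

(* Defs.v *)
From mathcomp Require Import all_boot all_order all_algebra.
Set Implicit Arguments. Unset Strict Implicit. Unset Printing Implicit Defensive.
Import Order.TTheory GRing.Theory Num.Theory.

Definition strict_linear_order {X : Type} (lt : X -> X -> Prop) : Prop :=
  (forall x, ~ lt x x) /\
  (forall x y z, lt x y -> lt y z -> lt x z) /\
  (forall x y, lt x y \/ x = y \/ lt y x).

Definition le_of {X : Type} (lt : X -> X -> Prop) (x y : X) : Prop :=
  lt x y \/ x = y.

Definition countable_set {X : Type} (A : X -> Prop) : Prop :=
  exists f : X -> nat, forall x y, A x -> A y -> f x = f y -> x = y.

Definition has_first {X : Type} (lt : X -> X -> Prop) : Prop :=
  exists m : X, forall y, le_of lt m y.

Definition closed_between {X : Type} (lt : X -> X -> Prop) (x y z : X) : Prop :=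
  (le_of lt x z /\ le_of lt z y) \/ (le_of lt y z /\ le_of lt z x).

Definition sim_omega {X : Type} (lt : X -> X -> Prop) (x y : X) : Prop :=
  countable_set (closed_between lt x y).

(* L / ~_omega is the one-point order: L nonempty and all points equivalent *)
Definition condensation_trivial {X : Type} (lt : X -> X -> Prop) : Prop :=
  (exists x : X, True) /\ forall x y : X, sim_omega lt x y.

Definition is_omega1 {W : Type} (ltW : W -> W -> Prop) : Prop :=
  strict_linear_order ltW /\ well_founded ltW /\
  (forall a : W, countable_set (fun b => ltW b a)) /\
  ~ countable_set (fun _ : W => True).

Definition is_succ {W : Type} (ltW : W -> W -> Prop) (a b : W) : Prop :=
  ltW a b /\ forall c, ltW a c -> le_of ltW b c.

Definition strictly_increasing {I X : Type} (ltI : I -> I -> Prop)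
  (lt : X -> X -> Prop) (s : I -> X) : Prop :=
  forall i j, ltI i j -> lt (s i) (s j).

Definition cofinal_seq {I X : Type} (lt : X -> X -> Prop) (s : I -> X) : Prop :=
  forall y : X, exists i : I, le_of lt y (s i).

(* the ordinal beta < omega_1, as the initial segment of W below beta *)
Definition below {W : Type} (ltW : W -> W -> Prop) (beta : W) : Type :=
  { b : W | ltW b beta }.

Definition below_lt {W : Type} (ltW : W -> W -> Prop) (beta : W)
  (i j : below ltW beta) : Prop := ltW (proj1_sig i) (proj1_sig j).

(* cf(L) = omega_1: the least length of a strictly increasing cofinal
   sequence in L is omega_1, i.e. there is one of length omega_1 and none of
   any length beta < omega_1. *)
Definition cf_is_omega1 {W X : Type} (ltW : W -> W -> Prop)
  (lt : X -> X -> Prop) : Prop :=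
  (exists s : W -> X, strictly_increasing ltW lt s /\ cofinal_seq lt s) /\
  (forall beta : W, ~ exists s : below ltW beta -> X,
       strictly_increasing (@below_lt W ltW beta) lt s /\ cofinal_seq lt s).

(* ---------- the order U = R^* + Q + R ---------- *)

(* R = omega_1 with each alpha replaced by u_alpha followed by Q(alpha):
   an element is (alpha, None) = u_alpha or (alpha, Some q) = q in Q(alpha). *)
Inductive Ucar (W : Type) : Type :=
| ULeft  : W -> option rat -> Ucar W
| UMid   : rat -> Ucar W
| URight : W -> option rat -> Ucar W.

Definition opt_lt (o o' : option rat) : Prop :=
  match o, o' with
  | None, Some _ => True
  | Some q, Some q' => (q < q')%R
  | _, _ => False
  end.

Definition R_lt {W : Type} (ltW : W -> W -> Prop) (a : W) (o : option rat)
  (a' : W) (o' : option rat) : Prop :=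
  ltW a a' \/ (a = a' /\ opt_lt o o').

Definition U_lt {W : Type} (ltW : W -> W -> Prop) (u v : Ucar W) : Prop :=
  match u, v with
  | ULeft a o, ULeft a' o' => R_lt ltW a' o' a o   (* reversed *)
  | ULeft _ _, _ => True
  | UMid q, UMid q' => (q < q')%R
  | UMid _, URight _ _ => True
  | URight a o, URight a' o' => R_lt ltW a o a' o'
  | _, _ => False
  end.

Definition embeds {X Y : Type} (ltX : X -> X -> Prop) (ltY : Y -> Y -> Prop) : Prop :=
  exists f : X -> Y, forall x y, ltX x y <-> ltY (f x) (f y).

(* Main.v *)
Require Import Defs.
From mathcomp Require Import all_boot all_order all_algebra.
From mathcomp Require Import zify lra.
From Stdlib Require Import Classical ClassicalEpsilon.
Set Implicit Arguments. Unset Strict Implicit. Unset Printing Implicit Defensive.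
Import Order.TTheory GRing.Theory Num.Theory.

Definition cgood {X : Type} (lt : X -> X -> Prop) (A : X -> Prop) (f : X -> nat)
  (n : nat) (h : nat -> rat) (q : rat) : Prop :=
  forall z y, A z -> A y -> (f z < n)%N -> f y = n ->
   (lt z y -> (h (f z) < q)%R) /\ (lt y z -> (q < h (f z))%R).

Fixpoint cHs {X : Type} (lt : X -> X -> Prop) (A : X -> Prop) (f : X -> nat)
  (n : nat) : nat -> rat :=
  match n with
  | O => fun _ => 0%R
  | S n' => fun m => if m == n' then
        epsilon (inhabits 0%R) (cgood lt A f n' (cHs lt A f n'))
      else cHs lt A f n' m
  end.

Definition cemb {X : Type} (lt : X -> X -> Prop) (A : X -> Prop) (f : X -> nat)
  (y : X) : rat := cHs lt A f (f y).+1 (f y).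

Definition inI (lo hi : option rat) (q : rat) : Prop :=
  (match lo with Some a => is_true (a < q)%R | None => True end) /\
  (match hi with Some b => is_true (q < b)%R | None => True end).

Lemma cHs_stable X (lt : X -> X -> Prop) A f n d m :
  (m < n)%N -> cHs lt A f (n + d) m = cHs lt A f n m.
Proof.
move=> Hm; elim: d => [|d IH]; first by rewrite addn0.
rewrite addnS /=. have ->: (m == n + d) = false by apply/eqP; lia. exact IH.
Qed.

Lemma cexists_good X (lt : X -> X -> Prop) (HL : strict_linear_order lt)
  (A : X -> Prop) (f : X -> nat)
  (Hf : forall y z, A y -> A z -> f y = f z -> y = z) n (h : nat -> rat)
  (P : forall z w, A z -> A w -> (f z < n)%N -> (f w < n)%N -> lt z w ->
        (h (f z) < h (f w))%R) :
  exists q, cgood lt A f n h q.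
Proof.
case: HL => [irr [tr tri]].
destruct (classic (exists y0, A y0 /\ f y0 = n)) as [[y0 [Ay0 fy0]]|Hno]; last first.
  by exists 0%R => z y Az Ay _ fy; exfalso; apply: Hno; eauto.
suff [q Hq]: exists q, forall z, A z -> (f z < n)%N ->
    (lt z y0 -> (h (f z) < q)%R) /\ (lt y0 z -> (q < h (f z))%R).
  exists q => z y Az Ay Hz fy.
  have ->: y = y0 by apply: Hf => //; congruence.
  exact: Hq.
have key: forall k, (k <= n)%N -> exists lo hi,
   (forall a, lo = Some a -> exists z, A z /\ (f z < k)%N /\ lt z y0 /\ a = h (f z)) /\
   (forall b, hi = Some b -> exists w, A w /\ (f w < k)%N /\ lt y0 w /\ b = h (f w)) /\
   (forall q, inI lo hi q -> forall z, A z -> (f z < k)%N ->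
       (lt z y0 -> (h (f z) < q)%R) /\ (lt y0 z -> (q < h (f z))%R)).
  elim=> [|k IH] Hk.
    by exists None, None; split=> //; split.
  have [lo [hi [Hlo [Hhi Hc]]]] := IH (ltnW Hk).
  destruct (classic (exists z, A z /\ f z = k)) as [[z0 [Az0 fz0]]|Hnz].
  - have [Hz0|[Hz0|Hz0]] := tri z0 y0.
    + have [lo' [Hlo' Hsub]] : exists lo',
        (forall a, lo' = Some a -> exists z, A z /\ (f z < k.+1)%N /\ lt z y0 /\ a = h (f z)) /\
        (forall q, (match lo' with Some a => is_true (a < q)%R | None => True end) ->
           (match lo with Some a => is_true (a < q)%R | None => True end) /\ (h k < q)%R).
        case: lo Hlo Hc => [a|] Hlo Hc.
          have [Hak|Hak] := ltP a (h k).
            exists (Some (h k)); split.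
              by move=> a' [<-]; exists z0; rewrite fz0; split=> //; split=> //; lia.
            by move=> q Hq; split=> //; apply: lt_trans Hq.
          exists (Some a); split.
            move=> a' [<-]; have [z [Az [Hz [Hzy ->]]]] := Hlo a erefl.
            by exists z; split=> //; split=> //; lia.
          by move=> q Hq; split=> //; apply: le_lt_trans Hq.
        exists (Some (h k)); split.
          by move=> a' [<-]; exists z0; rewrite fz0; split=> //; split=> //; lia.
        by move=> q Hq; split.
      exists lo', hi; split=> //; split.
        by move=> b /Hhi [w [Aw [Hw Hr]]]; exists w; split=> //; split=> //; lia.
      move=> q [Hq1 Hq2] z Az Hz.
      have [Hl Hkq] := Hsub q Hq1.
      case: (eqVneq (f z) k) => Efz.
        have Ez : z = z0 by apply: Hf => //; congruence.
        subst z; rewrite Efz; split=> // Hyz.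
        by exfalso; apply: (irr y0); apply: tr Hyz Hz0.
      apply: (Hc q _ z Az); first by split.
      by move/eqP: Efz; lia.
    + by exfalso; subst z0; lia.
    + have [hi' [Hhi' Hsub]] : exists hi',
        (forall b, hi' = Some b -> exists w, A w /\ (f w < k.+1)%N /\ lt y0 w /\ b = h (f w)) /\
        (forall q, (match hi' with Some b => is_true (q < b)%R | None => True end) ->
           (match hi with Some b => is_true (q < b)%R | None => True end) /\ (q < h k)%R).
        case: hi Hhi Hc => [b|] Hhi Hc.
          have [Hak|Hak] := ltP (h k) b.
            exists (Some (h k)); split.
              by move=> a' [<-]; exists z0; rewrite fz0; split=> //; split=> //; lia.
            by move=> q Hq; split=> //; apply: lt_trans Hak.
          exists (Some b); split.
            move=> a' [<-]; have [z [Az [Hz [Hzy ->]]]] := Hhi b erefl.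
            by exists z; split=> //; split=> //; lia.
          by move=> q Hq; split=> //; apply: lt_le_trans Hak.
        exists (Some (h k)); split.
          by move=> a' [<-]; exists z0; rewrite fz0; split=> //; split=> //; lia.
        by move=> q Hq; split.
      exists lo, hi'; split.
        by move=> b /Hlo [w [Aw [Hw Hr]]]; exists w; split=> //; split=> //; lia.
      split=> //.
      move=> q [Hq1 Hq2] z Az Hz.
      have [Hl Hkq] := Hsub q Hq2.
      case: (eqVneq (f z) k) => Efz.
        have Ez : z = z0 by apply: Hf => //; congruence.
        subst z; rewrite Efz; split=> // Hyz.
        by exfalso; apply: (irr y0); apply: tr Hz0 Hyz.
      apply: (Hc q _ z Az); first by split.
      by move/eqP: Efz; lia.
  - exists lo, hi; split.
      by move=> a /Hlo [w [Aw [Hw Hr]]]; exists w; split=> //; split=> //; lia.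
    split.
      by move=> a /Hhi [w [Aw [Hw Hr]]]; exists w; split=> //; split=> //; lia.
    move=> q Hq z Az Hz; apply: Hc => //.
    case: (eqVneq (f z) k) => Efz; first by exfalso; apply: Hnz; eauto.
    by move/eqP: Efz; lia.
have [lo [hi [Hlo [Hhi Hc]]]] := key n (leqnn n).
suff [q Hq]: exists q, inI lo hi q by exists q; apply: Hc.
clear Hc; case: lo Hlo => [a|] Hlo; case: hi Hhi => [b|] Hhi.
- have [z [Az [Hz [Hzy ->]]]] := Hlo a erefl.
  have [w [Aw [Hw [Hyw ->]]]] := Hhi b erefl.
  have Hab := P z w Az Aw Hz Hw (tr _ _ _ Hzy Hyw).
  by exists ((h (f z) + h (f w)) / 2)%R; split; lra.
- by exists (a + 1)%R; split=> //; lra.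
- by exists (b - 1)%R; split=> //; lra.
- by exists 0%R.
Qed.

Lemma cInv X (lt : X -> X -> Prop) (HL : strict_linear_order lt)
  (A : X -> Prop) (f : X -> nat)
  (Hf : forall y z, A y -> A z -> f y = f z -> y = z) n :
  forall z y, A z -> A y -> (f z < n)%N -> (f y < n)%N -> lt z y ->
    (cHs lt A f n (f z) < cHs lt A f n (f y))%R.
Proof.
have HL' := HL; case: HL' => [irr [tr tri]].
elim: n => [|n IH] z y Az Ay Hz Hy Hzy; first by [].
have HQ : cgood lt A f n (cHs lt A f n)
   (epsilon (inhabits 0%R) (cgood lt A f n (cHs lt A f n))).
  apply: epsilon_spec; exact: cexists_good.
rewrite /=.
case: (eqVneq (f z) n) => Ez; case: (eqVneq (f y) n) => Ey.
- have E : z = y by apply: Hf => //; congruence.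
  by subst; exfalso; exact: irr Hzy.
- have Hy' : (f y < n)%N by move/eqP: Ey; lia.
  exact: (proj2 (HQ y z Ay Az Hy' Ez) Hzy).
- have Hz' : (f z < n)%N by move/eqP: Ez; lia.
  exact: (proj1 (HQ z y Az Ay Hz' Ey) Hzy).
- apply: IH => //; [move/eqP: Ez | move/eqP: Ey]; lia.
Qed.

Lemma cemb_eq X (lt : X -> X -> Prop) A f (w : X) N :
  (f w < N)%N -> cHs lt A f N (f w) = cemb lt A f w.
Proof. move=> H; rewrite /cemb -(subnKC H) cHs_stable //. Qed.

Lemma cemb_lt X (lt : X -> X -> Prop) (HL : strict_linear_order lt)
  (A : X -> Prop) (f : X -> nat)
  (Hf : forall y z, A y -> A z -> f y = f z -> y = z) z y :
  A z -> A y -> lt z y -> (cemb lt A f z < cemb lt A f y)%R.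
Proof.
move=> Az Ay Hzy.
have Hz : (f z < (maxn (f z) (f y)).+1)%N by lia.
have Hy : (f y < (maxn (f z) (f y)).+1)%N by lia.
rewrite -(cemb_eq lt A Hz) -(cemb_eq lt A Hy).
exact: cInv.
Qed.

Theorem proposition3p12
  (W : Type) (ltW : W -> W -> Prop) (HW : is_omega1 ltW)
  (L : Type) (ltL : L -> L -> Prop) (HL : strict_linear_order ltL)
  (Hfirst : has_first ltL)
  (Hcond : condensation_trivial ltL)
  (Hcf : cf_is_omega1 ltW ltL)
  (x : W -> L)
  (Hx_incr : strictly_increasing ltW ltL x)
  (Hx_cof : cofinal_seq ltL x)
  (Hx_union : forall y : L, exists a b : W,
      is_succ ltW a b /\ le_of ltL (x a) y /\ ltL y (x b)) :
  embeds ltL (U_lt ltW).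
Proof.
have HL' := HL; case: HL' => [irr [tr tri]].
case: HW => [[irrW [trW triW]] _].
have leltL : forall a b c, le_of ltL a b -> ltL b c -> ltL a c.
  by move=> a b c [H|->] // H2; apply: tr H H2.
have ltleL : forall a b c, ltL a b -> le_of ltL b c -> ltL a c.
  by move=> a b c H [H2|<-] //; apply: tr H H2.
have monx : forall a b, le_of ltW a b -> le_of ltL (x a) (x b).
  by move=> a b [H|->]; [left; apply: Hx_incr | right].
have succ_uniq : forall a b b', is_succ ltW a b -> is_succ ltW a b' -> b = b'.
  move=> a b b' [H1 H2] [H3 H4].
  case: (H2 b' H3) => [Hl|//]; case: (H4 b H1) => [Hl'|//].
  by exfalso; apply: (irrW b); apply: trW Hl Hl'.
pose blk y := proj1_sig (constructive_indefinite_description _ (Hx_union y)).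
have Hblk : forall y, exists b, is_succ ltW (blk y) b /\ le_of ltL (x (blk y)) y /\ ltL y (x b).
  by move=> y; exact: (proj2_sig (constructive_indefinite_description _ (Hx_union y))).
have Hcnt : forall a, exists f : L -> nat,
    forall y z, blk y = a -> blk z = a -> f y = f z -> y = z.
  move=> a.
  destruct (classic (exists y0, blk y0 = a)) as [[y0 Hy0]|Hno]; last first.
    by exists (fun _ => 0%N) => y z Hy; exfalso; apply: Hno; eauto.
  have [b0 [Hs0 _]] := Hblk y0.
  have [f Hf] := proj2 Hcond (x a) (x b0).
  exists f => y z Hy Hz Hfe; apply: Hf => //.
  + have [b [Hs [H1 H2]]] := Hblk y.
    rewrite Hy Hy0 in Hs H1 Hs0; rewrite (succ_uniq _ _ _ Hs0 Hs).
    by left; split => //; left.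
  + have [b [Hs [H1 H2]]] := Hblk z.
    rewrite Hz Hy0 in Hs H1 Hs0; rewrite (succ_uniq _ _ _ Hs0 Hs).
    by left; split => //; left.
pose F a := proj1_sig (constructive_indefinite_description _ (Hcnt a)).
have HF : forall a y z, blk y = a -> blk z = a -> F a y = F a z -> y = z.
  by move=> a; exact: (proj2_sig (constructive_indefinite_description _ (Hcnt a))).
pose G a y := cemb ltL (fun z => blk z = a) (F a) y.
have HG : forall y z, blk y = blk z -> ltL y z -> (G (blk z) y < G (blk z) z)%R.
  move=> y z E H; apply: cemb_lt => //; exact: HF.
have F3 : forall y z, ltW (blk y) (blk z) -> ltL y z.
  move=> y z H.
  have [b [Hs [H1 H2]]] := Hblk y.
  have [b' [_ [H3 _]]] := Hblk z.
  apply: ltleL H2 _.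
  have Hle : le_of ltW b (blk z) by case: Hs => _ Hs; apply: Hs.
  have H4 := monx _ _ Hle.
  case: H3 => [H3|E3].
    by left; apply: leltL H4 H3.
  by rewrite -E3.
exists (fun y => URight (blk y) (Some (G (blk y) y))) => y z /=.
rewrite /R_lt /=; split.
- move=> Hyz; have [H|[E|H]] := triW (blk y) (blk z).
  + by left.
  + by right; split => //; rewrite E; apply: HG.
  + by exfalso; apply: (irr y); apply: tr Hyz (F3 _ _ H).
- case=> [H|[E Hq]]; first exact: F3.
  have [H|[E'|H]] := tri y z => //.
    by subst z; rewrite ltxx in Hq.
  have Hq' := HG z y (esym E) H; rewrite E in Hq Hq'.
  by have := lt_trans Hq Hq'; rewrite ltxx.
Qed.
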